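(* Let $(U,\mathrm{dist})$ be a metric space, $\Lambda\in\mathbb{R}_{>0}\cup\{\infty\}$, $f:U\to\mathbb{R}$ a $\Lambda$-locally Lipschitz function, and $g$ a smooth growth function on $U$. Then the function $B^*:U\to\mathbb{R}_{\ge0}$, $B^*(x)=\sup_{z\in U}\frac{\mathrm{L}_{f,\Lambda}(z)}{g(x,z)}$, is a $g$-smooth upper bound on the pointwise Lipschitz constant $\mathrm{L}_{f,\Lambda}$, i.e. (1) $B^*(x)\ge\mathrm{L}_{f,\Lambda}(x)$ for all $x\in U$, and (2) $B^*(x)\le g(x,x')\,B^*(x')$ for all $x,x'\in U$.
   Context: $f$ is $\Lambda$-locally Lipschitz if there is $K\ge0$ with $|f(x)-f(x')|\le K\,\mathrm{dist}(x,x')$ whenever $\mathrm{dist}(x,x')\le\Lambda$. For $x\in U$, $\mathrm{L}_{f,\Lambda}(x)$ is the infimum of all $K$ such that $|f(x)-f(x')|\le K\,\mathrm{dist}(x,x')$ for all $x'\in U$ with $\mathrm{dist}(x,x')\le\Lambda$. A smooth growth function is $g:U\times U\to\mathbb{R}_{>0}$ of the form $g(x,x')=g_0(\mathrm{dist}(x,x'))$, where $g_0:\mathbb{R}_{\ge0}\to\mathbb{R}_{\ge1}$ is monotonically increasing, $g_0(0)=1$, and $g_0(r_1+r_2)\le g_0(r_1)g_0(r_2)$ for all $r_1,r_2\ge0$. *)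

(* Defs.v *)
From HB Require Import structures.
From mathcomp Require Import all_boot all_order all_algebra.
From mathcomp Require Import boolp classical_sets reals constructive_ereal ereal.
Set Implicit Arguments. Unset Strict Implicit. Unset Printing Implicit Defensive.
Import Order.TTheory GRing.Theory Num.Theory.
Local Open Scope classical_set_scope.
Local Open Scope ring_scope.

Section Defs.
Context {R : realType} {U : Type}.

Definition is_metric (dist : U -> U -> R) : Prop :=
  (forall x y, 0 <= dist x y) /\
  (forall x y, dist x y = 0 <-> x = y) /\
  (forall x y, dist x y = dist y x) /\
  (forall x y z, dist x z <= dist x y + dist y z).

(* Lambda : \bar R, Lambda = +oo encodes Lambda = infinity. *)
Definition within_Lambda (dist : U -> U -> R) (Lambda : \bar R) (x x' : U) : Prop :=
  ((dist x x')%:E <= Lambda)%E.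

Definition locally_lipschitz (dist : U -> U -> R) (Lambda : \bar R) (f : U -> R) : Prop :=
  exists K : R, 0 <= K /\
    forall x x', within_Lambda dist Lambda x x' -> `|f x - f x'| <= K * dist x x'.

Definition pointwise_lip (dist : U -> U -> R) (Lambda : \bar R) (f : U -> R) (x : U) : R :=
  inf [set K : R | 0 <= K /\
        forall x', within_Lambda dist Lambda x x' -> `|f x - f x'| <= K * dist x x'].

(* g0 generating a smooth growth function g(x,x') = g0 (dist x x') *)
Definition smooth_growth_profile (g0 : R -> R) : Prop :=
  (forall r1 r2, 0 <= r1 -> r1 <= r2 -> g0 r1 <= g0 r2) /\
  (forall r, 0 <= r -> 1 <= g0 r) /\
  g0 0 = 1 /\
  (forall r1 r2, 0 <= r1 -> 0 <= r2 -> g0 (r1 + r2) <= g0 r1 * g0 r2).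

Definition growth_fun (dist : U -> U -> R) (g0 : R -> R) (x x' : U) : R :=
  g0 (dist x x').

Definition Bstar (dist : U -> U -> R) (Lambda : \bar R) (f : U -> R) (g0 : R -> R) (x : U) : R :=
  sup (range (fun z => pointwise_lip dist Lambda f z / growth_fun dist g0 x z)).

End Defs.

(* Main.v *)
Require Import Defs.
From HB Require Import structures.
From mathcomp Require Import all_boot all_order all_algebra.
From mathcomp Require Import boolp classical_sets reals constructive_ereal ereal.
Import Order.TTheory GRing.Theory Num.Theory.
Local Open Scope ring_scope.

Theorem mainTheorem2 (R : realType) (U : Type) (dist : U -> U -> R)
  (Lambda : \bar R) (f : U -> R) (g0 : R -> R) :
  is_metric dist ->
  (0 < Lambda)%E ->
  locally_lipschitz dist Lambda f ->
  smooth_growth_profile g0 ->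
  (forall x : U, pointwise_lip dist Lambda f x <= Bstar dist Lambda f g0 x) /\
  (forall x x' : U, Bstar dist Lambda f g0 x <=
      growth_fun dist g0 x x' * Bstar dist Lambda f g0 x').
Proof.
move=> [d0 [dE [dC dT]]] _ [K [K0 HK]] [gmon [g1 [gz gmul]]].
set L := pointwise_lip dist Lambda f.
have L0 : forall z, 0 <= L z.
  move=> z; apply: lb_le_inf; first by exists K; split => // x' /HK.
  by move=> y [].
have LK : forall z, L z <= K.
  move=> z; apply: (ge_inf); first by exists 0 => y [].
  by split => // x' /HK.
have gpos : forall x z, 0 < growth_fun dist g0 x z.
  by move=> x z; apply: lt_le_trans (g1 _ (d0 x z)).
have rle : forall x z, L z / growth_fun dist g0 x z <= L z.
  move=> x z; rewrite ler_pdivrMr // ler_peMr //; exact: g1.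
have hub : forall x, has_ubound (range (fun z => L z / growth_fun dist g0 x z)).
  move=> x; exists K => _ [z _ <-]; exact: le_trans (rle x z) (LK z).
have mem : forall x z, L z / growth_fun dist g0 x z <= Bstar dist Lambda f g0 x.
  by move=> x z; apply: (ub_le_sup (hub x)); exists z.
split.
  move=> x; have := mem x x; rewrite /growth_fun.
  by rewrite (proj2 (dE x x) erefl) gz divr1.
move=> x x'; apply: ge_sup; first by exists (L x / growth_fun dist g0 x x), x.
move=> _ [z _ <-].
have Hg : growth_fun dist g0 x' z <= growth_fun dist g0 x x' * growth_fun dist g0 x z.
  rewrite /growth_fun; apply: le_trans (gmul _ _ (d0 _ _) (d0 _ _)).
  apply: gmon => //; rewrite (dC x x'); exact: dT.
apply: le_trans (ler_wpM2l (ltW (gpos x x')) (mem x' z)).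
rewrite mulrA ler_pdivrMr // mulrAC ler_pdivlMr //.
rewrite -/L mulrAC mulrC; by apply: ler_wpM2r; [exact: L0|exact: Hg].
Qed.
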